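(* Let $n\in\mathbb{N}$. (i) Let $S$ be a pseudo-symmetric numerical semigroup and $A\subseteq\{x\in S\mid \frac{\mathrm{F}(S)}{2}<x<\mathrm{F}(S)\}$ with $\#A=n$ such that $S\setminus A$ is a numerical semigroup. Then $\mathrm{l}(S\setminus A)=2n+1$. (ii) Conversely, for every numerical semigroup $T$ with $\mathrm{l}(T)=2n+1$ there exist a pseudo-symmetric numerical semigroup $S$ with $\mathrm{F}(S)=\mathrm{F}(T)$ and a set $A\subseteq\{x\in S\mid \frac{\mathrm{F}(S)}{2}<x<\mathrm{F}(S)\}$ with $\#A=n$ such that $T=S\setminus A$.
   Context: A numerical semigroup is a subset $S\subseteq\mathbb{N}$ closed under addition with $0\in S$ and $\mathbb{N}\setminus S$ finite; $\mathrm{F}(S)=\max(\mathbb{Z}\setminus S)$. $\mathrm{N}(S)=\{s\in S\mid s<\mathrm{F}(S)\}$, $\mathrm{L}(S)=\{x\in\mathbb{N}\setminus S\mid \mathrm{F}(S)-x\notin \mathrm{N}(S)\}$, $\mathrm{l}(S)=\#\mathrm{L}(S)$. A numerical semigroup is irreducible if it is not the intersection of two numerical semigroups properly containing it; pseudo-symmetric means irreducible with even Frobenius number. *)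

(* Defs.v *)
(* Subsets of N are predicates nat -> Prop; the Frobenius
   number is an integer (F(N) = -1). *)
From Stdlib Require Import ZArith List ClassicalEpsilon.
Import ListNotations.
Open Scope Z_scope.

Definition inZ (S : nat -> Prop) (z : Z) : Prop := 0 <= z /\ S (Z.to_nat z).

Definition numerical_semigroup (S : nat -> Prop) : Prop :=
  S 0%nat /\
  (forall x y, S x -> S y -> S (x + y)%nat) /\
  (exists m : nat, forall x, (m <= x)%nat -> S x).

Definition is_frobenius (S : nat -> Prop) (f : Z) : Prop :=
  ~ inZ S f /\ (forall z, f < z -> inZ S z).

Definition Frob (S : nat -> Prop) : Z :=
  epsilon (inhabits 0) (is_frobenius S).

Definition Nset (S : nat -> Prop) (z : Z) : Prop := inZ S z /\ z < Frob S.

Definition Lset (S : nat -> Prop) (x : nat) : Prop :=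
  ~ S x /\ ~ Nset S (Frob S - Z.of_nat x).

Definition has_card (P : nat -> Prop) (k : nat) : Prop :=
  exists l : list nat, NoDup l /\ (forall x, In x l <-> P x) /\ length l = k.

Definition properly_contains (S1 S : nat -> Prop) : Prop :=
  (forall x, S x -> S1 x) /\ (exists x, S1 x /\ ~ S x).

Definition irreducible (S : nat -> Prop) : Prop :=
  numerical_semigroup S /\
  ~ (exists S1 S2 : nat -> Prop,
       numerical_semigroup S1 /\ numerical_semigroup S2 /\
       properly_contains S1 S /\ properly_contains S2 S /\
       (forall x, S x <-> (S1 x /\ S2 x))).

Definition pseudo_symmetric (S : nat -> Prop) : Prop :=
  irreducible S /\ Z.Even (Frob S).

Definition setminus (S A : nat -> Prop) : nat -> Prop := fun x => S x /\ ~ A x.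

(* Main.v *)
Require Import Defs.
From Stdlib Require Import ZArith List Lia Classical ClassicalEpsilon.
Import ListNotations.
Open Scope Z_scope.

Lemma inZ_nat G n : inZ G (Z.of_nat n) <-> G n.
Proof. unfold inZ; rewrite Nat2Z.id; split; [tauto| intros; split; [lia|auto]]. Qed.

Lemma inZ_add G a b : (forall x y, G x -> G y -> G (x+y)%nat) -> inZ G a -> inZ G b -> inZ G (a+b).
Proof. unfold inZ; intros H [Ha Sa] [Hb Sb]. split; [lia|]. rewrite Z2Nat.inj_add by lia. auto. Qed.

Lemma frob_exists G : numerical_semigroup G -> exists f, is_frobenius G f.
Proof.
  intros [H0 [Hadd [m Hm]]].
  revert Hm. induction m as [|m IH]; intros Hm.
  - exists (-1). split. unfold inZ; lia. intros z Hz. unfold inZ; split; [lia|apply Hm; lia].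
  - destruct (classic (G m)) as [Sm|Sm].
    + apply IH. intros x Hx. destruct (Nat.eq_dec x m); [subst; auto| apply Hm; lia].
    + exists (Z.of_nat m). split. rewrite inZ_nat; auto. intros z Hz. split; [lia|apply Hm; lia].
Qed.

Lemma frob_spec G : numerical_semigroup G -> is_frobenius G (Frob G).
Proof. intros H. unfold Frob. apply epsilon_spec. apply frob_exists; auto. Qed.

Lemma frob_eq G f : numerical_semigroup G -> is_frobenius G f -> Frob G = f.
Proof.
  intros HG [Nf Hf]. destruct (frob_spec G HG) as [Ng Hg].
  destruct (Z.lt_total f (Frob G)) as [l|[e|l]]; auto.
  exfalso; apply Ng, Hf, l. exfalso; apply Nf, Hg, l.
Qed.

Lemma gap_le G x : numerical_semigroup G -> ~ G x -> Z.of_nat x <= Frob G.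
Proof.
  intros HG Gx. destruct (frob_spec G HG) as [NF HF].
  destruct (Z_le_gt_dec (Z.of_nat x) (Frob G)); auto. exfalso; apply Gx, inZ_nat, HF; lia.
Qed.

Lemma Lset_iff G x : numerical_semigroup G ->
  (Lset G x <-> ~ G x /\ ~ inZ G (Frob G - Z.of_nat x)).
Proof.
  intros HG. destruct HG as [H0 _].
  unfold Lset, Nset. split; intros [A B]; split; auto.
  - intros C. apply B. split; auto. destruct x; [contradiction|lia].
  - tauto.
Qed.

Lemma sup_contains_F G G1 : numerical_semigroup G ->
  (forall x y, G1 x -> G1 y -> G1 (x+y)%nat) ->
  (forall x, ~ G x -> ~ inZ G (Frob G - Z.of_nat x) -> 2 * Z.of_nat x = Frob G) ->
  (forall x, G x -> G1 x) -> forall h, G1 h -> ~ G h -> inZ G1 (Frob G).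
Proof.
  intros HG H1 HL Hsub h S1h Sh.
  pose proof (gap_le G h HG Sh) as hle.
  destruct (classic (inZ G (Frob G - Z.of_nat h))) as [C|C].
  - replace (Frob G) with (Z.of_nat h + (Frob G - Z.of_nat h)) by ring.
    apply inZ_add; auto. apply inZ_nat; auto. destruct C; split; auto.
  - pose proof (HL h Sh C) as E. rewrite <- E.
    replace (2 * Z.of_nat h) with (Z.of_nat h + Z.of_nat h) by ring.
    apply inZ_add; auto; apply inZ_nat; auto.
Qed.

Lemma Lsmall_irreducible G : numerical_semigroup G ->
  (forall x, ~ G x -> ~ inZ G (Frob G - Z.of_nat x) -> 2 * Z.of_nat x = Frob G) -> irreducible G.
Proof.
  intros HG HL. split; auto. intros (S1 & S2 & N1 & N2 & [P1 [h1 [A1 B1]]] & [P2 [h2 [A2 B2]]] & E).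
  pose proof (frob_spec G HG) as [NF HF].
  apply NF. destruct (sup_contains_F G S1 HG (proj1 (proj2 N1)) HL P1 h1 A1 B1) as [z1 Z1].
  destruct (sup_contains_F G S2 HG (proj1 (proj2 N2)) HL P2 h2 A2 B2) as [z2 Z2].
  split; auto. apply E; auto.
Qed.

Lemma bounded_max (P : nat -> Prop) B : (forall x, P x -> (x <= B)%nat) -> (exists x, P x) ->
  exists h, P h /\ forall y, P y -> (y <= h)%nat.
Proof.
  induction B as [|B IH]; intros HB [x Px].
  - exists x. split; auto. intros y Py. pose proof (HB x Px); pose proof (HB y Py); lia.
  - destruct (classic (P (S B))) as [PB|PB].
    + exists (S B). split; auto.
    + apply IH; [|exists x; auto]. intros y Py. pose proof (HB y Py).
      destruct (Nat.eq_dec y (S B)); [subst; contradiction| lia].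
Qed.
Lemma irred_Lsmall G : irreducible G ->
  forall x, ~ G x -> ~ inZ G (Frob G - Z.of_nat x) -> 2 * Z.of_nat x = Frob G.
Proof.
  intros [HG Hirr] x0 Gx0 C0. pose proof (frob_spec G HG) as [NF HF].
  pose proof HG as (G0 & Gadd & m & Gm).
  pose proof (gap_le G x0 HG Gx0) as x0le.
  set (F := Frob G) in *.
  assert (x0pos : (x0 <> 0)%nat) by (intro; subst; auto).
  destruct (classic (2 * Z.of_nat x0 = F)) as [E|NE]; auto. exfalso.
  set (P := fun y => ~ G y /\ ~ inZ G (F - Z.of_nat y) /\ F < 2 * Z.of_nat y).
  assert (Pex : exists y, P y).
  { destruct (Z_lt_le_dec F (2 * Z.of_nat x0)).
    - exists x0; repeat split; auto.
    - exists (Z.to_nat (F - Z.of_nat x0)). unfold P. split; [|split].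
      + intro H. apply C0. apply inZ_nat in H. rewrite Z2Nat.id in H by lia. exact H.
      + rewrite Z2Nat.id by lia. replace (F - (F - Z.of_nat x0)) with (Z.of_nat x0) by ring.
        rewrite inZ_nat; auto.
      + lia. }
  assert (Pb : forall y, P y -> (y <= Z.to_nat F)%nat).
  { intros y [Gy _]. pose proof (gap_le G y HG Gy). fold F in H. lia. }
  destruct (bounded_max P _ Pb Pex) as [h [[Gh [Ch Hh]] Hmax]].
  assert (hF : Z.of_nat h <> F).
  { intro E. apply Ch. replace (F - Z.of_nat h) with (Z.of_nat 0) by lia. apply inZ_nat; auto. }
  assert (Hha : forall a, G a -> G (a+h)%nat \/ (a+h)%nat = h).
  { intros a Ga. destruct (Nat.eq_dec a 0) as [a0|a0]; [subst; right; lia|].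
    destruct (classic (G (a+h)%nat)) as [H|H]; [left; auto|].
    exfalso. assert (P (a+h)%nat) as Pah.
    { unfold P; split; [auto|split; [|lia]].
      intro C. apply Ch. replace (F - Z.of_nat h) with ((F - Z.of_nat (a+h)) + Z.of_nat a) by lia.
      apply inZ_add; auto. apply inZ_nat; auto. }
    pose proof (Hmax _ Pah). lia. }
  assert (HFa : forall a, G a -> G (a + Z.to_nat F)%nat \/ Z.of_nat (a + Z.to_nat F) = F).
  { intros a Ga. destruct (Nat.eq_dec a 0) as [a0|a0]; [subst; right; lia|].
    left. apply inZ_nat. apply HF. lia. }
  apply Hirr. exists (fun y => G y \/ y = h), (fun y => G y \/ Z.of_nat y = F).
  split; [|split; [|split; [|split]]].
  - split; [left; auto|split].
    + intros a b [Ga|Ea] [Gb|Eb].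
      * left; auto.
      * subst b. apply Hha; auto.
      * subst a. rewrite Nat.add_comm. apply Hha; auto.
      * subst; left. apply inZ_nat. rewrite Nat2Z.inj_add. apply HF. lia.
    + exists m. intros; left; auto.
  - split; [left; auto|split].
    + intros a b [Ga|Ea] [Gb|Eb].
      * left; auto.
      * replace b with (Z.to_nat F) by lia. apply HFa; auto.
      * replace a with (Z.to_nat F) by lia. rewrite Nat.add_comm. apply HFa; auto.
      * left. apply inZ_nat. rewrite Nat2Z.inj_add. apply HF. lia.
    + exists m. intros; left; auto.
  - split; [intros; left; auto | exists h; split; [right; auto| auto]].
  - split; [intros; left; auto| exists (Z.to_nat F); split; [right; lia | ]].
    intro H. apply NF. split; [lia|auto].
  - intros y; split; [intros; split; left; auto|].
    intros [[?|?] [?|?]]; auto. subst y. exfalso; auto.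
Qed.
Lemma NoDup_map_in {A B} (f : A -> B) l :
  (forall x y, In x l -> In y l -> f x = f y -> x = y) -> NoDup l -> NoDup (map f l).
Proof.
  induction l as [|a l IH]; intros Hi Hn; simpl; constructor.
  - inversion Hn; subst. intro C. apply in_map_iff in C as [x [E Ix]].
    assert (x = a) by (apply Hi; simpl; auto). subst; auto.
  - inversion Hn; subst. apply IH; auto. intros; apply Hi; simpl; auto.
Qed.

Lemma part1 (n : nat) (G A : nat -> Prop) :
     pseudo_symmetric G ->
     (forall x, A x -> G x /\ Frob G < 2 * Z.of_nat x /\ Z.of_nat x < Frob G) ->
     has_card A n ->
     numerical_semigroup (setminus G A) ->
     has_card (Lset (setminus G A)) (2 * n + 1)%nat.
Proof.
  intros [Hirr [k Hk]] HA [lA [NA [IA LA]]] HT.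
  pose proof (proj1 Hirr) as HG. pose proof (frob_spec G HG) as [NF HF].
  pose proof HG as (G0 & Gadd & m & Gm).
  pose proof (irred_Lsmall G Hirr) as HL.
  set (F := Frob G) in *.
  assert (FT : Frob (setminus G A) = F).
  { apply frob_eq; auto. split.
    - intros [Hz [H _]]. apply NF. split; auto.
    - intros z Hz. destruct (HF z Hz) as [z0 Gz]. split; auto. split; auto.
      intro Az. destruct (HA _ Az) as [_ [_ C]]. lia. }
  assert (kpos : 1 <= k).
  { destruct (Z_le_gt_dec 1 k); auto. exfalso.
    destruct (Z.eq_dec k 0). apply NF. subst F. rewrite Hk. subst k. apply inZ_nat with (n := 0%nat); auto.
    assert (inZ G (-1)) by (apply HF; lia). destruct H; lia. }
  set (kn := Z.to_nat k).
  assert (Gk : ~ G kn).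
  { intro H. apply NF. replace F with (Z.of_nat (kn + kn)) by lia. apply inZ_nat; auto. }
  assert (Ga' : forall a, A a -> ~ G (Z.to_nat (F - Z.of_nat a))).
  { intros a Aa H. destruct (HA a Aa) as [Ga [H1 H2]]. apply NF.
    replace F with (Z.of_nat (a + Z.to_nat (F - Z.of_nat a))) by lia. apply inZ_nat; auto. }
  exists (kn :: lA ++ map (fun a => Z.to_nat (F - Z.of_nat a)) lA).
  split; [|split].
  - constructor.
    + rewrite in_app_iff, in_map_iff. intros [I|[a [E I]]].
      * apply IA in I. destruct (HA _ I). lia.
      * apply IA in I. destruct (HA _ I). lia.
    + apply NoDup_app; auto.
      * apply NoDup_map_in; auto. intros x y Ix Iy E.
        apply IA in Ix, Iy. destruct (HA _ Ix), (HA _ Iy). lia.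
      * intros a Ia C. apply in_map_iff in C as [b [E Ib]].
        apply IA in Ia, Ib. destruct (HA _ Ia), (HA _ Ib). lia.
  - intros x. rewrite (Lset_iff _ x HT), FT. split.
    + intros [E|I].
      * subst x. split.
        -- intros [H _]; auto.
        -- intros [_ [H _]]. apply Gk. replace (Z.to_nat (F - Z.of_nat kn)) with kn in H by lia. auto.
      * apply in_app_iff in I as [I|I].
        -- apply IA in I. destruct (HA _ I) as [Ga [H1 H2]]. split.
           ++ intros [_ C]; auto.
           ++ intros [_ [C _]]. apply (Ga' x I); auto.
        -- apply in_map_iff in I as [a [E Ia]]. apply IA in Ia.
           destruct (HA _ Ia) as [Ga [H1 H2]]. subst x. split.
           ++ intros [C _]. apply (Ga' a Ia); auto.
           ++ intros [_ [_ C]]. apply C. replace (Z.to_nat (F - Z.of_nat (Z.to_nat (F - Z.of_nat a)))) with a by lia. auto.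
    + intros [Tx Cx].
      destruct (classic (A x)) as [Ax|Ax].
      { right. apply in_app_iff. left. apply IA; auto. }
      assert (Gx : ~ G x) by (intro; apply Tx; split; auto).
      destruct (classic (2 * Z.of_nat x = F)) as [E|E].
      { left. lia. }
      destruct (classic (inZ G (F - Z.of_nat x))) as [C|C]; [|exfalso; apply E, HL; auto].
      right. apply in_app_iff. right. apply in_map_iff.
      pose proof (gap_le G x HG Gx) as xle. fold F in xle.
      exists (Z.to_nat (F - Z.of_nat x)). split; [lia|].
      apply IA. destruct (classic (A (Z.to_nat (F - Z.of_nat x)))) as [Aa|Aa]; auto.
      exfalso. apply Cx. destruct C as [C0 C1]. split; auto. split; auto.
  - simpl. rewrite length_app, length_map. lia.
Qed.
Lemma len3 (F : Z) (l : list nat) :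
  length l = (length (filter (fun x => Z.ltb F (2 * Z.of_nat x)) l)
   + length (filter (fun x => Z.ltb (2 * Z.of_nat x) F) l)
   + length (filter (fun x => Z.eqb (2 * Z.of_nat x) F) l))%nat.
Proof.
  induction l as [|a l IH]; [reflexivity|]. cbn [filter length].
  destruct (Z.ltb_spec F (2*Z.of_nat a)), (Z.ltb_spec (2*Z.of_nat a) F), (Z.eqb_spec (2*Z.of_nat a) F);
    cbn [length]; lia.
Qed.

Lemma len_le1 (l : list nat) : NoDup l -> (forall x y, In x l -> In y l -> x = y) -> (length l <= 1)%nat.
Proof.
  destruct l as [|a [|b l]]; simpl; auto; intros Hn H.
  exfalso. inversion Hn; subst. apply H2. left. apply H; simpl; auto.
Qed.

Lemma part2 (n : nat) (T : nat -> Prop) :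
     numerical_semigroup T ->
     has_card (Lset T) (2 * n + 1)%nat ->
     exists S A : nat -> Prop,
       pseudo_symmetric S /\ Frob S = Frob T /\
       (forall x, A x -> S x /\ Frob S < 2 * Z.of_nat x /\ Z.of_nat x < Frob S) /\
       has_card A n /\
       (forall x, T x <-> setminus S A x).
Proof.
  intros HT [l [Nl [Il Ll]]].
  pose proof (frob_spec T HT) as [NF HF].
  pose proof HT as (T0 & Tadd & m & Tm).
  set (F := Frob T) in *.
  assert (LI : forall x, Lset T x <-> ~ T x /\ ~ inZ T (F - Z.of_nat x)) by (intro; apply Lset_iff; auto).
  assert (Lle : forall x, Lset T x -> Z.of_nat x < F).
  { intros x Lx. apply LI in Lx as [Tx Cx]. pose proof (gap_le T x HT Tx). fold F in H.
    destruct (Z.eq_dec (Z.of_nat x) F); [|lia]. exfalso. apply Cx.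
    replace (F - Z.of_nat x) with (Z.of_nat 0) by lia. apply inZ_nat; auto. }
  assert (Lsym : forall x, Lset T x -> Lset T (Z.to_nat (F - Z.of_nat x))).
  { intros x Lx. pose proof (Lle x Lx). apply LI in Lx as [Tx Cx]. apply LI. split.
    - intro H'. apply Cx. apply inZ_nat in H'. rewrite Z2Nat.id in H' by lia. auto.
    - replace (F - Z.of_nat (Z.to_nat (F - Z.of_nat x))) with (Z.of_nat x) by lia. rewrite inZ_nat; auto. }
  set (lA := filter (fun x => Z.ltb F (2 * Z.of_nat x)) l).
  set (lB := filter (fun x => Z.ltb (2 * Z.of_nat x) F) l).
  set (lC := filter (fun x => Z.eqb (2 * Z.of_nat x) F) l).
  pose proof (len3 F l) as L3. fold lA lB lC in L3.
  set (g := fun x => Z.to_nat (F - Z.of_nat x)).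
  assert (AB : (length lA <= length lB)%nat).
  { rewrite <- (length_map g lB). apply NoDup_incl_length; [apply NoDup_filter; auto|].
    intros x Ix. apply filter_In in Ix as [Ix Hx]. apply Z.ltb_lt in Hx. apply Il in Ix.
    pose proof (Lle x Ix).
    apply in_map_iff. exists (g x). unfold g. split; [lia|]. apply filter_In. split.
    - apply Il. apply Lsym; auto.
    - apply Z.ltb_lt. lia. }
  assert (BA : (length lB <= length lA)%nat).
  { rewrite <- (length_map g lA). apply NoDup_incl_length; [apply NoDup_filter; auto|].
    intros x Ix. apply filter_In in Ix as [Ix Hx]. apply Z.ltb_lt in Hx. apply Il in Ix.
    pose proof (Lle x Ix).
    apply in_map_iff. exists (g x). unfold g. split; [lia|]. apply filter_In. split.
    - apply Il. apply Lsym; auto.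
    - apply Z.ltb_lt. lia. }
  assert (C1 : (length lC <= 1)%nat).
  { apply len_le1; [apply NoDup_filter; auto|]. intros x y Ix Iy.
    apply filter_In in Ix as [_ Ix]. apply filter_In in Iy as [_ Iy].
    apply Z.eqb_eq in Ix. apply Z.eqb_eq in Iy. lia. }
  assert (LnA : length lA = n) by lia.
  assert (Cex : exists c, In c lC).
  { destruct lC as [|c lc]; [simpl in L3; lia|]. exists c; simpl; auto. }
  destruct Cex as [c Ic]. apply filter_In in Ic as [Ic Ec]. apply Z.eqb_eq in Ec.
  apply Il in Ic.
  assert (Tc : ~ T c) by (apply LI in Ic; tauto).
  assert (cpos : (c <> 0)%nat) by (intro; subst; auto).
  set (A := fun x => Lset T x /\ F < 2 * Z.of_nat x).
  set (S := fun x => T x \/ A x).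
  assert (HS : numerical_semigroup S).
  { split; [left; auto|split].
    - assert (key : forall a b, A a -> T b -> S (a + b)%nat).
      { intros a b [La Fa] Tb. destruct (Nat.eq_dec b 0); [subst; rewrite Nat.add_0_r; right; split; auto|].
        destruct (classic (T (a+b)%nat)) as [H|H]; [left; auto|].
        right. split; [|lia]. apply LI. split; auto. intro C. apply LI in La as [_ Ca]. apply Ca.
        replace (F - Z.of_nat a) with ((F - Z.of_nat (a+b)) + Z.of_nat b) by lia.
        apply inZ_add; auto. apply inZ_nat; auto. }
      intros a b [Ta|Aa] [Tb|Ab].
      + left; auto.
      + rewrite Nat.add_comm; apply key; auto.
      + apply key; auto.
      + left. apply inZ_nat. apply HF. destruct Aa, Ab. lia.
    - exists m. intros; left; auto. }
  assert (FS : Frob S = F).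
  { apply frob_eq; auto. split.
    - intros [Hz [H|[H _]]]. apply NF; split; auto. pose proof (Lle _ H). lia.
    - intros z Hz. destruct (HF z Hz). split; auto. left; auto. }
  exists S, A. split; [|split; [|split; [|split]]].
  - split; [|rewrite FS; exists (Z.of_nat c); lia].
    apply Lsmall_irreducible; auto. rewrite FS. intros x Sx Cx.
    assert (Tx : ~ T x) by (intro; apply Sx; left; auto).
    assert (Ax : ~ A x) by (intro; apply Sx; right; auto).
    pose proof (gap_le S x HS Sx) as xle. rewrite FS in xle.
    assert (Lx : Lset T x).
    { apply LI. split; auto. intro C. apply Cx. destruct C. split; auto. left; auto. }
    pose proof (Lsym x Lx) as Ly.
    assert (Ay : ~ A (Z.to_nat (F - Z.of_nat x))).
    { intro H. apply Cx. split; [lia|]. right; auto. }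
    unfold A in Ax, Ay. assert (~ F < 2 * Z.of_nat x) by tauto.
    assert (~ F < 2 * Z.of_nat (Z.to_nat (F - Z.of_nat x))) by tauto. lia.
  - rewrite FS; reflexivity.
  - intros x Ax. rewrite FS. split; [right; auto|]. destruct Ax as [Lx Fx]. pose proof (Lle x Lx). lia.
  - exists lA. split; [apply NoDup_filter; auto|split; auto].
    intros x. unfold lA. rewrite filter_In, Z.ltb_lt. unfold A. rewrite <- Il. tauto.
  - intros x. unfold setminus, S, A. split.
    + intros Tx. split; [left; auto|]. intros [Lx _]. apply LI in Lx; tauto.
    + intros [[Tx|Ax] nA]; tauto.
Qed.

Theorem proposition22 (n : nat) :
  (forall (S A : nat -> Prop),
     pseudo_symmetric S ->
     (forall x, A x -> S x /\ Frob S < 2 * Z.of_nat x /\ Z.of_nat x < Frob S) ->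
     has_card A n ->
     numerical_semigroup (setminus S A) ->
     has_card (Lset (setminus S A)) (2 * n + 1)%nat)
  /\
  (forall T : nat -> Prop,
     numerical_semigroup T ->
     has_card (Lset T) (2 * n + 1)%nat ->
     exists S A : nat -> Prop,
       pseudo_symmetric S /\ Frob S = Frob T /\
       (forall x, A x -> S x /\ Frob S < 2 * Z.of_nat x /\ Z.of_nat x < Frob S) /\
       has_card A n /\
       (forall x, T x <-> setminus S A x)).
Proof. split; [intros; apply part1; auto | intros; apply part2; auto]. Qed.
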